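(* Let $m\ge 2$ and $n\ge 1$ be integers. Then either $\mu(n+m,m)=\mu(n+m,m-1)$, or $$\mu(n+m,m)\ge \mu(n,m)+\nu(m,m)=\mu(n,m)+\lceil m/2\rceil.$$
   Context: Let $\mathbb F_2=\{0,1\}$ be the field with two elements. For $u\in\mathbb F_2^n$, $|u|$ denotes the Hamming weight of $u$. A wiring on $n$ vertices is a matrix $W=(w_{i,j})\in M(n,n;\mathbb F_2)$ with $w_{i,i}=1$ for all $i$. The degree of vertex $j$ is the number of $1$s in the $j$th column of $W$, and $\deg(W)$ is the maximum degree over all vertices. For $c\in\mathbb F_2^n$, $M(W,c)=\max\{|Wx+c| : x\in\mathbb F_2^n\}$. For $n,m\ge1$, $A(n,m)$ is the set of wirings on $n$ vertices with $\deg(W)\le m$. Define $\mu(n,m)=\min\{M(W,0): W\in A(n,m)\}$ and $\nu(n,m)=\min\{M(W,c): W\in A(n,m),\ c\in\mathbb F_2^n\}$. *)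

(* Defs.v *)
From HB Require Import structures.
From mathcomp Require Import all_boot all_order all_algebra.
Set Implicit Arguments. Unset Strict Implicit. Unset Printing Implicit Defensive.
Import GRing.Theory.

Local Open Scope ring_scope.

Definition hweight (n : nat) (u : 'cV['F_2]_n) : nat :=
  #|[set i : 'I_n | u i ord0 != 0]|.

Definition is_wiring (n : nat) (W : 'M['F_2]_n) : bool :=
  [forall i : 'I_n, W i i == 1].

Definition vdeg (n : nat) (W : 'M['F_2]_n) (j : 'I_n) : nat :=
  #|[set i : 'I_n | W i j != 0]|.

Definition wdeg (n : nat) (W : 'M['F_2]_n) : nat :=
  (\max_(j : 'I_n) vdeg W j)%N.

Definition Mval (n : nat) (W : 'M['F_2]_n) (c : 'cV['F_2]_n) : nat :=
  (\max_(x : 'cV['F_2]_n) hweight (W *m x + c))%N.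

Definition inA (n m : nat) (W : 'M['F_2]_n) : bool :=
  is_wiring W && (wdeg W <= m)%N.

(* mu(n,m) = min { M(W,0) : W in A(n,m) }.  The default value n of the
   iterated min is harmless: every M(W,c) <= n, and A(n,m) is nonempty
   (it contains the identity) for m >= 1. *)
Definition mu (n m : nat) : nat :=
  \big[minn/n]_(W : 'M['F_2]_n | inA m W) Mval W 0.

Definition nu (n m : nat) : nat :=
  \big[minn/n]_(Wc : 'M['F_2]_n * 'cV['F_2]_n | inA m Wc.1) Mval Wc.1 Wc.2.

(* Main.v *)
Require Import Defs.
From mathcomp Require Import all_boot all_order all_algebra.
Import GRing.Theory.
Local Open Scope ring_scope.
Lemma F2_cases (a : 'F_2) : a = 0 \/ a = 1.
Proof. case: a => [[|[|k]]] Hk; [left|right|]; try by apply/val_inj. by []. Qed.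
Lemma F2_add1 (a : 'F_2) : (a + 1 != 0) = (a == 0).
Proof. by case: (F2_cases a) => ->. Qed.
Lemma F2_addxx (a : 'F_2) : a + a = 0.
Proof. by case: (F2_cases a) => ->; apply/val_inj. Qed.
Lemma bigmin_le_seq (I : eqType) (r : seq I) (P : pred I) (F : I -> nat) d i0 :
  i0 \in r -> P i0 -> (\big[minn/d]_(i <- r | P i) F i <= F i0)%N.
Proof.
elim: r => // a r IH; rewrite inE big_cons => /orP[/eqP<-|ir] Pi.
  by rewrite Pi geq_minl.
case: (P a); last exact: IH.
by rewrite geq_min IH ?orbT.
Qed.
Lemma bigmin_le (I : finType) (P : pred I) (F : I -> nat) d i0 : P i0 ->
  (\big[minn/d]_(i | P i) F i <= F i0)%N.
Proof. by move=> Pi; apply: bigmin_le_seq => //; rewrite mem_index_enum. Qed.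
Lemma le_bigmin (I : finType) (P : pred I) (F : I -> nat) d k :
  (k <= d)%N -> (forall i, P i -> k <= F i)%N -> (k <= \big[minn/d]_(i | P i) F i)%N.
Proof. move=> kd kF; elim/big_ind: _ => //= x y; by rewrite leq_min => -> ->. Qed.
From mathcomp Require Import zify.
Lemma hweightE n (u : 'cV['F_2]_n) : hweight u = (\sum_(i : 'I_n) (u i ord0 != 0%R))%N.
Proof. by rewrite /hweight -sum1_card big_mkcond /=; apply eq_bigr => i _; rewrite inE; case: ifP. Qed.

Lemma half_count m (W : 'M['F_2]_m) (c : 'cV['F_2]_m) i : W i i = 1 ->
  (#|[set x : 'cV['F_2]_m | (W *m x + c)%R i ord0 != 0%R]|.*2 = 2 ^ m)%N.
Proof.
move=> Wii.
set A := [set x : 'cV['F_2]_m | _].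
pose g (x : 'cV['F_2]_m) := x + delta_mx i ord0.
have ginj : injective g by move=> x y; apply: addIr.
have gE x : (W *m g x + c) i ord0 = (W *m x + c) i ord0 + 1.
  rewrite /g mulmxDr -colE addrAC !mxE Wii; done.
have h1 : (#|~: A| <= #|A|)%N.
  rewrite -(card_imset _ ginj); apply: subset_leq_card; apply/subsetP => y.
  case/imsetP => x; rewrite !inE => Hx ->; rewrite gE F2_add1; by move: Hx; rewrite negbK.
have h2 : (#|A| <= #|~: A|)%N.
  rewrite -(card_imset _ ginj); apply: subset_leq_card; apply/subsetP => y.
  case/imsetP => x; rewrite !inE => Hx ->; rewrite gE F2_add1; by rewrite Hx.
have := cardsC A; rewrite card_mx card_Fp // muln1 => <-.
have -> : #|~: A| = #|A| by apply/eqP; rewrite eqn_leq h1 h2.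
by rewrite addnn.
Qed.
Lemma card_set_sum (T : finType) (P : pred T) : #|[set x | P x]| = (\sum_x P x)%N.
Proof. by rewrite -sum1_card big_mkcond /=; apply eq_bigr => i _; rewrite inE; case: ifP. Qed.

Lemma Mval_lb m (W : 'M['F_2]_m) c : is_wiring W -> (uphalf m <= Mval W c)%N.
Proof.
move/forallP => Wd.
have S : (2 * \sum_(x : 'cV['F_2]_m) hweight (W *m x + c) = m * 2 ^ m)%N.
  rewrite big_distrr /=.
  under eq_bigr => x _ do rewrite hweightE big_distrr /=.
  rewrite exchange_big /=.
  under eq_bigr => i _ do rewrite -big_distrr /= -card_set_sum mul2n (@half_count _ _ c _ (eqP (Wd i))).
  by rewrite sum_nat_const card_ord.
have U : (\sum_(x : 'cV['F_2]_m) hweight (W *m x + c) <= 2 ^ m * Mval W c)%N.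
  apply: (@leq_trans (\sum_(x : 'cV['F_2]_m) Mval W c)%N).
    by apply: leq_sum => x _; apply: (leq_bigmax x).
  by rewrite sum_nat_const card_mx card_Fp // muln1.
have : (m * 2 ^ m <= 2 * Mval W c * 2 ^ m)%N by rewrite -S -mulnA leq_mul2l mulnC U orbT.
rewrite leq_pmul2r ?expn_gt0 // => H.
rewrite uphalf_half; move: H; rewrite -{1}(odd_double_half m) -addnn.
case: (odd m) => /=; lia.
Qed.
Lemma sum_lt m k : (\sum_(i < m) (i < k : nat) = minn k m)%N.
Proof. elim: m => [|m IH]; first by rewrite big_ord0; lia. rewrite big_ord_recr /= IH. case: ltnP; lia. Qed.
Lemma sum_ge m k : (\sum_(i < m) (k <= i : nat) = m - k)%N.
Proof. elim: m => [|m IH]; first by rewrite big_ord0. rewrite big_ord_recr /= IH. case: leqP; lia. Qed.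

Lemma uphalf_facts m : (uphalf m <= m)%N /\ (m - uphalf m <= uphalf m)%N /\ (uphalf m + uphalf m <= m.+1)%N.
Proof. rewrite uphalf_half; move: (odd_double_half m); rewrite -addnn; case: (odd m) => /=; lia. Qed.

Lemma nu_eq m : nu m m = uphalf m.
Proof.
have [h1 [h2 _]] := uphalf_facts m.
apply/eqP; rewrite eqn_leq; apply/andP; split; last first.
  apply: le_bigmin => // Wc /andP[Wi _]; exact: Mval_lb.
pose J : 'M['F_2]_m := const_mx 1.
pose c : 'cV['F_2]_m := \col_i (if (i < uphalf m)%N then 1 else 0).
have inJ : inA m J.
  apply/andP; split; first by apply/forallP => i; rewrite mxE.
  apply/bigmax_leqP => j _; rewrite /vdeg.
  by apply: leq_trans (max_card _) _; rewrite card_ord.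
apply: leq_trans (@bigmin_le _ _ _ _ (J, c) inJ) _.
apply/bigmax_leqP => x _ /=.
have Je i : (J *m x) i ord0 = \sum_k x k ord0.
  by rewrite mxE; apply: eq_bigr => k _; rewrite mxE mul1r.
rewrite hweightE.
case: (F2_cases (\sum_k x k ord0)) => hs.
  under eq_bigr => i _ do rewrite mxE Je mxE hs add0r /=.
  apply: (leq_trans _ (geq_minl (uphalf m) m)); rewrite -(sum_lt m (uphalf m)); apply: leq_sum => i _; by case: ifP.
under eq_bigr => i _ do rewrite mxE Je mxE hs /=.
apply: leq_trans h2; rewrite -sum_ge; apply: leq_sum => i _; case: ltnP => //.
Qed.
Lemma main_bound n m (W : 'M['F_2]_(n+m)) j : inA m W -> (m <= vdeg W j)%N ->
  (mu n m + uphalf m <= Mval W 0)%N.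
Proof.
case/andP => /forallP Wd Wdeg Hj.
set S := [set i | W i j != 0].
have hS : #|S| = m.
  apply/eqP; rewrite eqn_leq Hj andbT; apply: leq_trans Wdeg.
  exact: (leq_bigmax j).
set T := ~: S.
have hT : #|T| = n.
  have := cardsC S; rewrite card_ord hS -/T; lia.
pose f (a : 'I_n) : 'I_(n+m) := enum_val (cast_ord (esym hT) a).
have finj : injective f by move=> a b /enum_val_inj /cast_ord_inj.
have fT a : f a \in T by apply: enum_valP.
have fS a : W (f a) j = 0.
  by move: (fT a); rewrite !inE negbK => /eqP.
pose W' : 'M['F_2]_n := \matrix_(a, b) W (f a) (f b).
have inW' : inA m W'.
  apply/andP; split; first by apply/forallP => a; rewrite mxE Wd.
  apply/bigmax_leqP => b _; rewrite /vdeg.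
  apply: leq_trans Wdeg; apply: leq_trans (leq_bigmax (f b)); rewrite /vdeg.
  rewrite -(card_imset _ finj); apply: subset_leq_card; apply/subsetP => i.
  by case/imsetP => a; rewrite !inE mxE => H ->.
have [y Hy] : {y : 'cV['F_2]_n | Mval W' 0 = hweight (W' *m y + 0)}.
  apply: eq_bigmax; apply/card_gt0P; by exists 0.
pose P : 'M['F_2]_(n+m, n) := \matrix_(i, a) (f a == i)%:R.
have WP : W *m P = \matrix_(i, a) W i (f a).
  apply/matrixP => i a; rewrite !mxE (bigD1 (f a)) //= mxE eqxx mulr1 big1 ?addr0 //.
  by move=> k /negbTE; rewrite mxE eq_sym => ->; rewrite mulr0.
pose cc i := (W *m (P *m y)) i ord0.
have ccf a : cc (f a) = (W' *m y) a ord0.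
  rewrite /cc mulmxA WP !mxE; apply: eq_bigr => b _; by rewrite !mxE.
have [b Hb] : exists b : 'F_2, (uphalf m <= #|[set i | (i \in S) && (cc i + b != 0)%R]|)%N.
  have [_ [_ h3]] := uphalf_facts m.
  have := cardsID [set i | cc i != 0] S; rewrite hS => E.
  case: (leqP (uphalf m) #|S :&: [set i | cc i != 0]|) => H.
    exists 0; apply: leq_trans H _; apply: subset_leq_card; apply/subsetP => i.
    by rewrite !inE addr0.
  exists 1.
  apply: (@leq_trans #|S :\: [set i | cc i != 0]|).
    lia.
  apply: subset_leq_card; apply/subsetP => i.
  by rewrite !inE F2_add1 negbK andbC.
pose x := P *m y + b *: delta_mx j ord0.
have Wx i : (W *m x) i ord0 = cc i + b * W i j.
  rewrite /x mulmxDr -scalemxAr -colE mxE; congr (_ + _); by rewrite !mxE.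
set A' := [set a | (W' *m y + 0) a ord0 != 0].
set B := [set i | (i \in S) && (cc i + b != 0)%R].
have hA' : hweight (W' *m y + 0) = #|A'| by [].
have dis : (f @: A') :&: B = set0.
  apply/setP => i; rewrite !inE; apply/negbTE; apply/negP => /andP[/imsetP[a _ ->]].
  by rewrite fS eqxx.
have sub : (f @: A') :|: B \subset [set i | (W *m x + 0) i ord0 != 0].
  apply/subsetP => i; rewrite !inE => /orP[/imsetP[a Ha ->]|/andP[HS Hc]].
    move: Ha; rewrite !inE !addr0 Wx fS mulr0 addr0 ccf => ->; done.
  rewrite addr0 Wx.
  have -> : W i j = 1 by case: (F2_cases (W i j)) HS => ->; rewrite ?eqxx.
  by rewrite mulr1.
have c1 : (mu n m <= #|A'|)%N by rewrite -hA' -Hy; exact: (@bigmin_le _ _ _ _ W' inW').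
have c2 : (#|A'| + #|B| <= hweight (W *m x + 0))%N.
  rewrite -(card_imset _ finj) -cardsUI dis cards0 addn0; exact: subset_leq_card sub.
have c3 : (hweight (W *m x + 0) <= Mval W 0)%N by exact: (leq_bigmax x).
apply: leq_trans c3; apply: leq_trans c2; exact: leq_add.
Qed.
Lemma bigmin_le_d (I : finType) (P : pred I) (F : I -> nat) d :
  (\big[minn/d]_(i | P i) F i <= d)%N.
Proof. elim/big_rec: _ => // i x _ H; exact: leq_trans (geq_minr _ _) H. Qed.

Theorem lemma5p1 (m n : nat) (hm : (2 <= m)%N) (hn : (1 <= n)%N) :
  mu (n + m) m = mu (n + m) m.-1 \/
  ((mu n m + nu m m <= mu (n + m) m)%N /\ nu m m = uphalf m).
Proof.
rewrite nu_eq.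
have le1 : (mu (n + m) m <= mu (n + m) m.-1)%N.
  apply: le_bigmin; first exact: bigmin_le_d.
  move=> W /andP[Wi Wd]; apply: bigmin_le; apply/andP; split => //.
  apply: leq_trans Wd _; exact: leq_pred.
have le2 : (minn (mu (n + m) m.-1) (mu n m + uphalf m) <= mu (n + m) m)%N.
  apply: le_bigmin; first exact: leq_trans (geq_minl _ _) (bigmin_le_d _ _ _ _).
  move=> W HW; case: (leqP (wdeg W) m.-1) => Hd.
    apply: leq_trans (geq_minl _ _) _; apply: bigmin_le.
    by case/andP: HW => Wi _; rewrite /inA Wi Hd.
  apply: leq_trans (geq_minr _ _) _.
  have [j Hj] : {j : 'I_(n + m) | wdeg W = vdeg W j}.
    apply: eq_bigmax; rewrite card_ord; lia.
  apply: (@main_bound n m W j HW); rewrite -Hj; lia.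
case: (leqP (mu (n + m) m.-1) (mu n m + uphalf m)) => H.
  left; apply/eqP; rewrite eqn_leq le1 /=; move: le2; rewrite (minn_idPl H) //.
right; split => //; move: le2; rewrite (minn_idPr (ltnW H)) //.
Qed.
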